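(* Let $\mathcal{G}$ be the affine plane of order $3$, let $\ell=\{a_1,a_2,a_3\}$, $m=\{b_1,b_2,b_3\}$, $n=\{c_1,c_2,c_3\}$ be its three pairwise parallel lines in one parallel class, let $R$ be a commutative ring with $2=0$, $A=M_R(\mathcal{G},1)$, and let $s$ be the sum of all $9$ points. Identify each line with the sum of its points in $A$. Then $\operatorname{ad}_\ell$ has eigenvalues $0$ and $1$, with eigenspaces \[ A^\ell_0=\langle a_1,a_2,a_3,s\rangle,\qquad A^\ell_1=\langle b_1+b_2,b_1+b_3,c_1+c_2,c_1+c_3\rangle, \] and generalized eigenspaces \[ \widetilde A^\ell_0=\langle a_1,a_2,a_3,m,n\rangle,\qquad \widetilde A^\ell_1=A^\ell_1 . \] In particular, $A=\widetilde A^\ell_0\oplus A^\ell_1$.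
   Context: The affine plane of order $3$ is the partial linear space of the $9$ points and $12$ lines of the affine plane over $\mathbb{F}_3$; any two distinct points $p,q$ are collinear (written $p\sim q$) and $p\wedge q$ is the third point of their line. The nilpotent Matsuo algebra $A=M_R(\mathcal{G},1)$ is the free $R$-module with basis the points and commutative bilinear product $p\cdot q=0$ if $p=q$, $p\cdot q=p+q+p\wedge q$ if $p\sim q$. $\operatorname{ad}_\ell(v)=\ell v$; eigenspace for $\lambda$: $\{v:\ell v=\lambda v\}$; generalized eigenspace: $\{v:(\operatorname{ad}_\ell-\lambda)^kv=0 \text{ for some } k\}$. Angle brackets denote $R$-linear span. *)

(* Defs.v *)
From HB Require Import structures.
From mathcomp Require Import all_boot all_order all_algebra.
Set Implicit Arguments. Unset Strict Implicit. Unset Printing Implicit Defensive.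
Import Order.TTheory GRing.Theory Num.Theory.
Local Open Scope ring_scope.

(* Points of the affine plane of order 3: the vector space F_3^2. *)
Definition pt := 'rV['F_3]_2.

(* The line through distinct points p, q is {p + t (q - p) | t in F_3};
   its third point (t = 2) is p /\ q. *)
Definition wedge (p q : pt) : pt := p + (q - p) *+ 2.

(* Lines of the plane: sets {p + t d | t in F_3} with d <> 0. A triple
   {x;y;z} of distinct points is a line iff z = wedge x y. *)

Section Matsuo.
Variable R : comPzRingType.

(* A = M_R(G,1): free R-module with basis the points. *)
Local Notation alg := {ffun pt -> R^o}.

Definition e (p : pt) : alg := [ffun x => (x == p)%:R].

(* product on basis vectors (all distinct points are collinear) *)
Definition prodb (p q : pt) : alg :=
  if p == q then 0 else e p + e q + e (wedge p q).

Definition mulA (u v : alg) : alg :=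
  \sum_(p : pt) \sum_(q : pt) (u p * v q) *: prodb p q.

Definition inspan (vs : seq alg) (v : alg) : Prop :=
  exists cs : seq R, size cs = size vs /\
    v = \sum_(i < size vs) cs`_i *: vs`_i.

Definition eigsp (x : alg) (lam : R) (v : alg) : Prop :=
  mulA x v = lam *: v.

Definition geigsp (x : alg) (lam : R) (v : alg) : Prop :=
  exists k : nat, iter k (fun w => mulA x w - lam *: w) v = 0.

Definition sall : alg := \sum_(p : pt) e p.

End Matsuo.
Notation alg R := {ffun pt -> R^o}.

(* Main.v *)
Require Import Defs.
From HB Require Import structures.
From mathcomp Require Import all_boot all_order all_algebra ring.
Import GRing.Theory.
Local Open Scope ring_scope.

Lemma F3_3 : (3%:R : 'F_3) = 0. Proof. by apply/eqP. Qed.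
Lemma pt3 (p : pt) : p + (p + p) = 0.
Proof. apply/rowP => i; rewrite !mxE.
move: (p 0 i) => x. rewrite -mulr2n -mulrS -mulr_natl F3_3. by rewrite mul0r. Qed.
Lemma wedgeE p q : wedge p q = - (p + q).
Proof. rewrite /wedge. apply/rowP => i; rewrite !mxE.
move: (p 0 i) (q 0 i) => x y. apply/eqP; rewrite -subr_eq0 opprK.
have -> : x + (y - x) *+ 2 + (x + y) = 3%:R * y by ring.
by rewrite F3_3 mul0r. Qed.

Lemma card_pt : #|pt| = 9%N.
Proof. by rewrite card_mx card_Fp. Qed.

Lemma cover (s : seq pt) : uniq s -> size s = 9%N -> forall x, x \in s.
Proof.
move=> Us Ss x; apply/negPn/negP => Hx.
have U' : uniq (x :: s) by rewrite /= Hx Us.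
have := max_card (mem (x :: s)). by rewrite (card_uniqP U') /= Ss card_pt.
Qed.

Lemma third (x y z : pt) : x + y + z = 0 -> z = - (x + y).
Proof. by move=> h; apply/eqP; rewrite -addr_eq0 addrC h. Qed.

Lemma line_in (x y z p q : pt) : x + y + z = 0 ->
  p \in [:: x; y; z] -> q \in [:: x; y; z] -> - (p + q) \in [:: x; y; z].
Proof.
move=> h.
have hz := third _ _ _ h.
have hx : x = - (y + z) by apply: third; rewrite -h addrC addrA.
have hy : y = - (z + x) by apply: third; rewrite -h [in RHS]addrC addrA.
have dd : forall w : pt, - (w + w) = w.
  by move=> w; apply/eqP; rewrite eq_sym -addr_eq0 pt3.
rewrite !inE => /or3P [] /eqP -> /or3P [] /eqP ->;
  rewrite ?dd ?eqxx ?orbT //.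
all: try (rewrite -hz eqxx ?orbT //); try (rewrite addrC -hz eqxx ?orbT //);
 try (rewrite -hx eqxx ?orbT //); try (rewrite addrC -hx eqxx ?orbT //);
 try (rewrite -hy eqxx ?orbT //); try (rewrite addrC -hy eqxx ?orbT //).
Qed.
Lemma wedge_mem (a1 a2 a3 b1 b2 b3 c1 c2 c3 : pt) :
 uniq [:: a1; a2; a3; b1; b2; b3; c1; c2; c3] ->
 a1 + a2 + a3 = 0 -> b1 + b2 + b3 = 0 -> c1 + c2 + c3 = 0 ->
 forall q, q \in [:: b1; b2; b3] ->
 uniq [:: - (a1 + q); - (a2 + q); - (a3 + q)] /\
 [:: - (a1 + q); - (a2 + q); - (a3 + q)] =i [:: c1; c2; c3].
Proof.
move=> U hA hB hC q hq.
have cov : forall x, x \in [:: a1; a2; a3] ++ [:: b1; b2; b3] ++ [:: c1; c2; c3] := cover _ U erefl.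
have U' : uniq ([:: a1; a2; a3] ++ [:: b1; b2; b3] ++ [:: c1; c2; c3]) := U.
move: U'; rewrite cat_uniq => /and3P [uL hLMN uMN].
move: uMN; rewrite cat_uniq => /and3P [uM hMN uN].
have dLM : forall p, p \in [:: a1; a2; a3] -> p \in [:: b1; b2; b3] -> False.
  move=> p pL pM; move/negP: hLMN; apply; apply/hasP; exists p => //.
  by rewrite mem_cat pM.
have dMN : forall p, p \in [:: b1; b2; b3] -> p \in [:: c1; c2; c3] -> False.
  by move=> p pM pN; move/negP: hMN; apply; apply/hasP; exists p.
have dLN : forall p, p \in [:: a1; a2; a3] -> p \in [:: c1; c2; c3] -> False.
  move=> p pL pN; move/negP: hLMN; apply; apply/hasP; exists p => //.
  by rewrite mem_cat pN orbT.
have inj : forall p p', (- (p + q) == - (p' + q)) = (p == p').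
  by move=> p p'; rewrite eqr_opp (inj_eq (@addIr _ q)).
have Wsub : forall p, p \in [:: a1; a2; a3] -> - (p + q) \in [:: c1; c2; c3].
  move=> p pL.
  have := cov (- (p + q)); rewrite !mem_cat => /or3P [] // H.
  - exfalso; apply: (dLM q) => //.
    have -> : q = - (p + - (p + q)) by rewrite opprD opprK addrA addNr add0r.
    exact: line_in.
  - exfalso; apply: (dLM p) => //.
    have -> : p = - (q + - (p + q)) by rewrite opprD opprK addrC -addrA addrN addr0.
    exact: line_in.
have Wu : uniq [:: - (a1 + q); - (a2 + q); - (a3 + q)].
  move: uL; rewrite /= !inE !inj. done.
split => //.
have SUB : {subset [:: - (a1 + q); - (a2 + q); - (a3 + q)] <= [:: c1; c2; c3]}.
  move=> x H; rewrite !inE in H.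
  case/or3P: H => /eqP ->; apply: Wsub; by rewrite !inE eqxx ?orbT.
by case: (@uniq_min_size _ _ [:: c1; c2; c3] Wu SUB (leqnn 3)).
Qed.

Section RR.
Variable R : comPzRingType.
Hypothesis hR2 : 2%:R = 0 :> R.

Lemma addxx (x : R) : x + x = 0. Proof. by rewrite -mulr2n -mulr_natr hR2 mulr0. Qed.
Lemma oppxx (x : R) : - x = x. Proof. by apply/eqP; rewrite eq_sym -subr_eq0 opprK addxx. Qed.
Lemma char2E (x y w : R) : x = y + 2%:R * w -> x = y.
Proof. by rewrite hR2 mul0r addr0. Qed.

Lemma eE p x : e R p x = (x == p)%:R. Proof. by rewrite ffunE. Qed.

Lemma ind3 (y1 y2 y3 x : pt) : uniq [:: y1; y2; y3] ->
  (x \in [:: y1; y2; y3])%:R = (x == y1)%:R + (x == y2)%:R + (x == y3)%:R :> R.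
Proof.
rewrite /= !inE !negb_or => /and3P [/andP [n12 n13] n23 _].
case: (x =P y1) => [E1|_]; case: (x =P y2) => [E2|_]; case: (x =P y3) => [E3|_] /=;
  rewrite ?addr0 ?add0r //; exfalso.
- by move/eqP: n12; apply; rewrite -E1 -E2.
- by move/eqP: n12; apply; rewrite -E1 -E2.
- by move/eqP: n13; apply; rewrite -E1 -E3.
- by move/eqP: n23; apply; rewrite -E2 -E3.
Qed.

Lemma prodbE p q x : p != q ->
  prodb R p q x = (x == p)%:R + (x == q)%:R + (x == - (p + q))%:R.
Proof. by move/negbTE=> h; rewrite /prodb h !ffunE wedgeE. Qed.

Lemma prodb_same p x : prodb R p p x = 0.
Proof. by rewrite /prodb eqxx ffunE. Qed.

Lemma sum_e (a : pt) (F : pt -> R) : \sum_p e R a p * F p = F a.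
Proof.
under eq_bigr => p _ do rewrite eE mulr_natl mulrb.
by rewrite -big_mkcond big_pred1_eq.
Qed.

End RR.

Lemma thirds (x y z : pt) : x + y + z = 0 ->
  (- (x + y) = z /\ - (y + x) = z) /\ (- (x + z) = y /\ - (z + x) = y) /\ (- (y + z) = x /\ - (z + y) = x).
Proof.
move=> h.
have h1 : forall u v w : pt, u + v + w = 0 -> - (u + v) = w by move=> u v w /third ->.
(do !split); apply: h1; rewrite -h; apply/rowP => i; rewrite !mxE; ring.
Qed.

Section RR2.
Variable R : comPzRingType.
Hypothesis hR2 : 2%:R = 0 :> R.

Lemma Kb (a1 a2 a3 b1 b2 b3 c1 c2 c3 : pt) :
 uniq [:: a1; a2; a3; b1; b2; b3; c1; c2; c3] ->
 a1 + a2 + a3 = 0 -> b1 + b2 + b3 = 0 -> c1 + c2 + c3 = 0 ->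
 forall q, q \in [:: b1; b2; b3] -> forall x,
 prodb R a1 q x + prodb R a2 q x + prodb R a3 q x =
 (x \in [:: a1; a2; a3])%:R + (x == q)%:R + (x \in [:: c1; c2; c3])%:R.
Proof.
move=> U hA hB hC q hq x.
have [Wu Wm] := wedge_mem _ _ _ _ _ _ _ _ _ U hA hB hC q hq.
have U' : uniq ([:: a1; a2; a3] ++ [:: b1; b2; b3] ++ [:: c1; c2; c3]) := U.
move: U'; rewrite cat_uniq => /and3P [uL hLMN _].
have nq : forall p, p \in [:: a1; a2; a3] -> p != q.
  move=> p pL; apply/eqP => E; move/negP: hLMN; apply; apply/hasP; exists p => //.
  by rewrite mem_cat E hq.
have n1 : a1 != q by apply: nq; rewrite !inE eqxx ?orbT.
have n2 : a2 != q by apply: nq; rewrite !inE eqxx ?orbT.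
have n3 : a3 != q by apply: nq; rewrite !inE eqxx ?orbT.
rewrite (prodbE R _ _ x n1) (prodbE R _ _ x n2) (prodbE R _ _ x n3).
rewrite -(Wm x) (ind3 R _ _ _ x Wu) (ind3 R _ _ _ x uL).
apply: (@char2E R hR2 _ _ (x == q)%:R); ring.
Qed.

Lemma Ka (a1 a2 a3 : pt) : uniq [:: a1; a2; a3] -> a1 + a2 + a3 = 0 ->
 forall q, q \in [:: a1; a2; a3] -> forall x,
 prodb R a1 q x + prodb R a2 q x + prodb R a3 q x = 0.
Proof.
move=> uL hA q hq x.
have [[e12 e21] [[e13 e31] [e23 e32]]] := thirds _ _ _ hA.
move: uL; rewrite /= !inE !negb_or => /and3P [/andP [n12 n13] n23 _].
have n21 : a2 != a1 by rewrite eq_sym.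
have n31 : a3 != a1 by rewrite eq_sym.
have n32 : a3 != a2 by rewrite eq_sym.
move: hq; rewrite !inE => /or3P [] /eqP ->; rewrite !prodb_same ?prodbE //
  ?e12 ?e21 ?e13 ?e31 ?e23 ?e32;
  apply: (@char2E R hR2 _ _ ((x == a1)%:R + (x == a2)%:R + (x == a3)%:R)); ring.
Qed.

End RR2.

Ltac eqs := repeat match goal with
 | H : is_true (?x != ?y) |- context [?x == ?y] => rewrite (negbTE H)
 | H : is_true (?x != ?y) |- context [?y == ?x] => rewrite (eq_sym y x) (negbTE H)
 end; rewrite ?eqxx.

Section Main.
Variable R : comPzRingType.
Hypothesis hR2 : 2%:R = 0 :> R.
Variables a1 a2 a3 b1 b2 b3 c1 c2 c3 : pt.
Hypothesis U : uniq [:: a1; a2; a3; b1; b2; b3; c1; c2; c3].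
Hypothesis hA : a1 + a2 + a3 = 0.
Hypothesis hB : b1 + b2 + b3 = 0.
Hypothesis hC : c1 + c2 + c3 = 0.

Ltac destr_uniq := let HU := fresh "HU" in have HU := U; rewrite /= ?inE ?negb_or in HU;
  repeat match goal with Hh : is_true (_ && _) |- _ => case/andP: Hh => ? ? end.

Lemma addfE (u w : alg R) x : (u + w) x = u x + w x. Proof. by rewrite ffunE. Qed.
Lemma scalefE (k : R) (u : alg R) x : (k *: u) x = k * u x. Proof. by rewrite ffunE. Qed.
Lemma zerofE x : (0 : alg R) x = 0. Proof. by rewrite ffunE. Qed.
Lemma subfE (u w : alg R) x : (u - w) x = u x - w x. Proof. by rewrite !ffunE. Qed.

Definition ll : alg R := e R a1 + e R a2 + e R a3.
Notation ad := (Defs.mulA ll).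

Definition mk9 (XA1 XA2 XA3 XB1 XB2 XB3 XC1 XC2 XC3 : R) : alg R := [ffun x => if x == a1 then XA1 else if x == a2 then XA2 else if x == a3 then XA3 else if x == b1 then XB1 else if x == b2 then XB2 else if x == b3 then XB3 else if x == c1 then XC1 else if x == c2 then XC2 else XC3].
Lemma mk9_a1 XA1 XA2 XA3 XB1 XB2 XB3 XC1 XC2 XC3 : mk9 XA1 XA2 XA3 XB1 XB2 XB3 XC1 XC2 XC3 a1 = XA1.
Proof. destr_uniq; rewrite ffunE; eqs; done. Qed.
Lemma mk9_a2 XA1 XA2 XA3 XB1 XB2 XB3 XC1 XC2 XC3 : mk9 XA1 XA2 XA3 XB1 XB2 XB3 XC1 XC2 XC3 a2 = XA2.
Proof. destr_uniq; rewrite ffunE; eqs; done. Qed.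
Lemma mk9_a3 XA1 XA2 XA3 XB1 XB2 XB3 XC1 XC2 XC3 : mk9 XA1 XA2 XA3 XB1 XB2 XB3 XC1 XC2 XC3 a3 = XA3.
Proof. destr_uniq; rewrite ffunE; eqs; done. Qed.
Lemma mk9_b1 XA1 XA2 XA3 XB1 XB2 XB3 XC1 XC2 XC3 : mk9 XA1 XA2 XA3 XB1 XB2 XB3 XC1 XC2 XC3 b1 = XB1.
Proof. destr_uniq; rewrite ffunE; eqs; done. Qed.
Lemma mk9_b2 XA1 XA2 XA3 XB1 XB2 XB3 XC1 XC2 XC3 : mk9 XA1 XA2 XA3 XB1 XB2 XB3 XC1 XC2 XC3 b2 = XB2.
Proof. destr_uniq; rewrite ffunE; eqs; done. Qed.
Lemma mk9_b3 XA1 XA2 XA3 XB1 XB2 XB3 XC1 XC2 XC3 : mk9 XA1 XA2 XA3 XB1 XB2 XB3 XC1 XC2 XC3 b3 = XB3.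
Proof. destr_uniq; rewrite ffunE; eqs; done. Qed.
Lemma mk9_c1 XA1 XA2 XA3 XB1 XB2 XB3 XC1 XC2 XC3 : mk9 XA1 XA2 XA3 XB1 XB2 XB3 XC1 XC2 XC3 c1 = XC1.
Proof. destr_uniq; rewrite ffunE; eqs; done. Qed.
Lemma mk9_c2 XA1 XA2 XA3 XB1 XB2 XB3 XC1 XC2 XC3 : mk9 XA1 XA2 XA3 XB1 XB2 XB3 XC1 XC2 XC3 c2 = XC2.
Proof. destr_uniq; rewrite ffunE; eqs; done. Qed.
Lemma mk9_c3 XA1 XA2 XA3 XB1 XB2 XB3 XC1 XC2 XC3 : mk9 XA1 XA2 XA3 XB1 XB2 XB3 XC1 XC2 XC3 c3 = XC3.
Proof. destr_uniq; rewrite ffunE; eqs; done. Qed.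
Lemma ext9 (u w : alg R) : u a1 = w a1 -> u a2 = w a2 -> u a3 = w a3 -> u b1 = w b1 -> u b2 = w b2 -> u b3 = w b3 -> u c1 = w c1 -> u c2 = w c2 -> u c3 = w c3 -> u = w.
Proof.
move=> ha1 ha2 ha3 hb1 hb2 hb3 hc1 hc2 hc3; apply/ffunP => x.
have := cover _ U erefl x; rewrite !inE.
by do 8 (case/orP; [by move/eqP->|]); move/eqP->.
Qed.
Lemma mk9_eta (v : alg R) : v = mk9 (v a1) (v a2) (v a3) (v b1) (v b2) (v b3) (v c1) (v c2) (v c3).
Proof. apply: ext9; by rewrite ?mk9_a1 ?mk9_a2 ?mk9_a3 ?mk9_b1 ?mk9_b2 ?mk9_b3 ?mk9_c1 ?mk9_c2 ?mk9_c3. Qed.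
Lemma mk9_inj XA1 XA2 XA3 XB1 XB2 XB3 XC1 XC2 XC3 YA1 YA2 YA3 YB1 YB2 YB3 YC1 YC2 YC3 : mk9 XA1 XA2 XA3 XB1 XB2 XB3 XC1 XC2 XC3 = mk9 YA1 YA2 YA3 YB1 YB2 YB3 YC1 YC2 YC3 -> XA1 = YA1 /\ XA2 = YA2 /\ XA3 = YA3 /\ XB1 = YB1 /\ XB2 = YB2 /\ XB3 = YB3 /\ XC1 = YC1 /\ XC2 = YC2 /\ XC3 = YC3.
Proof.
move=> E; do ?split.
- by have := congr1 (fun f : alg R => f a1) E; rewrite !mk9_a1.
- by have := congr1 (fun f : alg R => f a2) E; rewrite !mk9_a2.
- by have := congr1 (fun f : alg R => f a3) E; rewrite !mk9_a3.
- by have := congr1 (fun f : alg R => f b1) E; rewrite !mk9_b1.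
- by have := congr1 (fun f : alg R => f b2) E; rewrite !mk9_b2.
- by have := congr1 (fun f : alg R => f b3) E; rewrite !mk9_b3.
- by have := congr1 (fun f : alg R => f c1) E; rewrite !mk9_c1.
- by have := congr1 (fun f : alg R => f c2) E; rewrite !mk9_c2.
- by have := congr1 (fun f : alg R => f c3) E; rewrite !mk9_c3.
Qed.
Lemma add_mk9 XA1 XA2 XA3 XB1 XB2 XB3 XC1 XC2 XC3 YA1 YA2 YA3 YB1 YB2 YB3 YC1 YC2 YC3 : mk9 XA1 XA2 XA3 XB1 XB2 XB3 XC1 XC2 XC3 + mk9 YA1 YA2 YA3 YB1 YB2 YB3 YC1 YC2 YC3 = mk9 (XA1 + YA1) (XA2 + YA2) (XA3 + YA3) (XB1 + YB1) (XB2 + YB2) (XB3 + YB3) (XC1 + YC1) (XC2 + YC2) (XC3 + YC3).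
Proof. apply: ext9; by rewrite ?addfE ?scalefE ?mk9_a1 ?mk9_a2 ?mk9_a3 ?mk9_b1 ?mk9_b2 ?mk9_b3 ?mk9_c1 ?mk9_c2 ?mk9_c3. Qed.
Lemma scale_mk9 (k : R) XA1 XA2 XA3 XB1 XB2 XB3 XC1 XC2 XC3 : k *: mk9 XA1 XA2 XA3 XB1 XB2 XB3 XC1 XC2 XC3 = mk9 (k * XA1) (k * XA2) (k * XA3) (k * XB1) (k * XB2) (k * XB3) (k * XC1) (k * XC2) (k * XC3).
Proof. apply: ext9; by rewrite ?addfE ?scalefE ?mk9_a1 ?mk9_a2 ?mk9_a3 ?mk9_b1 ?mk9_b2 ?mk9_b3 ?mk9_c1 ?mk9_c2 ?mk9_c3. Qed.
Lemma e_a1 : e R a1 = mk9 1 0 0 0 0 0 0 0 0.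
Proof. destr_uniq; apply: ext9; rewrite ?eE ?mk9_a1 ?mk9_a2 ?mk9_a3 ?mk9_b1 ?mk9_b2 ?mk9_b3 ?mk9_c1 ?mk9_c2 ?mk9_c3; by eqs. Qed.
Lemma e_a2 : e R a2 = mk9 0 1 0 0 0 0 0 0 0.
Proof. destr_uniq; apply: ext9; rewrite ?eE ?mk9_a1 ?mk9_a2 ?mk9_a3 ?mk9_b1 ?mk9_b2 ?mk9_b3 ?mk9_c1 ?mk9_c2 ?mk9_c3; by eqs. Qed.
Lemma e_a3 : e R a3 = mk9 0 0 1 0 0 0 0 0 0.
Proof. destr_uniq; apply: ext9; rewrite ?eE ?mk9_a1 ?mk9_a2 ?mk9_a3 ?mk9_b1 ?mk9_b2 ?mk9_b3 ?mk9_c1 ?mk9_c2 ?mk9_c3; by eqs. Qed.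
Lemma e_b1 : e R b1 = mk9 0 0 0 1 0 0 0 0 0.
Proof. destr_uniq; apply: ext9; rewrite ?eE ?mk9_a1 ?mk9_a2 ?mk9_a3 ?mk9_b1 ?mk9_b2 ?mk9_b3 ?mk9_c1 ?mk9_c2 ?mk9_c3; by eqs. Qed.
Lemma e_b2 : e R b2 = mk9 0 0 0 0 1 0 0 0 0.
Proof. destr_uniq; apply: ext9; rewrite ?eE ?mk9_a1 ?mk9_a2 ?mk9_a3 ?mk9_b1 ?mk9_b2 ?mk9_b3 ?mk9_c1 ?mk9_c2 ?mk9_c3; by eqs. Qed.
Lemma e_b3 : e R b3 = mk9 0 0 0 0 0 1 0 0 0.
Proof. destr_uniq; apply: ext9; rewrite ?eE ?mk9_a1 ?mk9_a2 ?mk9_a3 ?mk9_b1 ?mk9_b2 ?mk9_b3 ?mk9_c1 ?mk9_c2 ?mk9_c3; by eqs. Qed.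
Lemma e_c1 : e R c1 = mk9 0 0 0 0 0 0 1 0 0.
Proof. destr_uniq; apply: ext9; rewrite ?eE ?mk9_a1 ?mk9_a2 ?mk9_a3 ?mk9_b1 ?mk9_b2 ?mk9_b3 ?mk9_c1 ?mk9_c2 ?mk9_c3; by eqs. Qed.
Lemma e_c2 : e R c2 = mk9 0 0 0 0 0 0 0 1 0.
Proof. destr_uniq; apply: ext9; rewrite ?eE ?mk9_a1 ?mk9_a2 ?mk9_a3 ?mk9_b1 ?mk9_b2 ?mk9_b3 ?mk9_c1 ?mk9_c2 ?mk9_c3; by eqs. Qed.
Lemma e_c3 : e R c3 = mk9 0 0 0 0 0 0 0 0 1.
Proof. destr_uniq; apply: ext9; rewrite ?eE ?mk9_a1 ?mk9_a2 ?mk9_a3 ?mk9_b1 ?mk9_b2 ?mk9_b3 ?mk9_c1 ?mk9_c2 ?mk9_c3; by eqs. Qed.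
Lemma sall_val x : sall R x = 1.
Proof.
rewrite /sall sum_ffunE (bigD1 x) //= eE eqxx big1 ?addr0 // => p.
by rewrite eE eq_sym => /negbTE ->.
Qed.
Lemma sall_mk9 : sall R = mk9 1 1 1 1 1 1 1 1 1.
Proof. apply: ext9; by rewrite sall_val ?mk9_a1 ?mk9_a2 ?mk9_a3 ?mk9_b1 ?mk9_b2 ?mk9_b3 ?mk9_c1 ?mk9_c2 ?mk9_c3. Qed.

Lemma mulAE (u v : alg R) x : Defs.mulA u v x = \sum_p \sum_q u p * v q * prodb R p q x.
Proof. rewrite /Defs.mulA sum_ffunE. apply: eq_bigr => p _. rewrite sum_ffunE. apply: eq_bigr => q _. by rewrite ffunE. Qed.

Lemma adE (v : alg R) x : ad v x =
  ((x \in [:: a1; a2; a3])%:R + (x \in [:: c1; c2; c3])%:R) * (v b1 + v b2 + v b3) +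
  ((x \in [:: a1; a2; a3])%:R + (x \in [:: b1; b2; b3])%:R) * (v c1 + v c2 + v c3) +
  (v b1 * (x == b1)%:R + v b2 * (x == b2)%:R + v b3 * (x == b3)%:R +
   v c1 * (x == c1)%:R + v c2 * (x == c2)%:R + v c3 * (x == c3)%:R).
Proof.
rewrite mulAE exchange_big /=.
have inner : forall q, \sum_p ll p * v q * prodb R p q x =
    v q * (prodb R a1 q x + prodb R a2 q x + prodb R a3 q x).
  move=> q.
  rewrite (eq_bigr (fun p => e R a1 p * (v q * prodb R p q x) + e R a2 p * (v q * prodb R p q x)
     + e R a3 p * (v q * prodb R p q x))); last by move=> p _; rewrite /ll !addfE; ring.
  by rewrite !big_split /= !sum_e; ring.
rewrite (eq_bigr _ (fun q _ => inner q)).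
rewrite (eq_bigl (fun q => q \in [:: a1; a2; a3; b1; b2; b3; c1; c2; c3])); last first.
  by move=> q; rewrite cover.
rewrite -(big_uniq _ U) /= !big_cons big_nil.
have U' : uniq ([:: a1; a2; a3] ++ [:: b1; b2; b3] ++ [:: c1; c2; c3]) := U.
move: U'; rewrite cat_uniq => /and3P [uL _ _].
have U2 : uniq [:: a1; a2; a3; c1; c2; c3; b1; b2; b3].
  rewrite (perm_uniq (s2 := [:: a1; a2; a3; b1; b2; b3; c1; c2; c3])) //.
  rewrite (perm_cat2l [:: a1; a2; a3] [:: c1; c2; c3 ; b1; b2; b3] ([:: b1; b2; b3] ++ [:: c1; c2; c3])).
  have P : perm_eq ([:: c1;c2;c3] ++ [:: b1;b2;b3]) ([:: b1;b2;b3] ++ [:: c1;c2;c3]) by apply/permPl; apply: perm_catC.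
  exact: P.

have ma1 : a1 \in [:: a1; a2; a3] by rewrite !inE eqxx ?orbT.
have ma2 : a2 \in [:: a1; a2; a3] by rewrite !inE eqxx ?orbT.
have ma3 : a3 \in [:: a1; a2; a3] by rewrite !inE eqxx ?orbT.
have mb1 : b1 \in [:: b1; b2; b3] by rewrite !inE eqxx ?orbT.
have mb2 : b2 \in [:: b1; b2; b3] by rewrite !inE eqxx ?orbT.
have mb3 : b3 \in [:: b1; b2; b3] by rewrite !inE eqxx ?orbT.
have mc1 : c1 \in [:: c1; c2; c3] by rewrite !inE eqxx ?orbT.
have mc2 : c2 \in [:: c1; c2; c3] by rewrite !inE eqxx ?orbT.
have mc3 : c3 \in [:: c1; c2; c3] by rewrite !inE eqxx ?orbT.
rewrite (Ka R hR2 a1 a2 a3 uL hA a1 ma1 x).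
rewrite (Ka R hR2 a1 a2 a3 uL hA a2 ma2 x).
rewrite (Ka R hR2 a1 a2 a3 uL hA a3 ma3 x).
rewrite (Kb R hR2 a1 a2 a3 b1 b2 b3 c1 c2 c3 U hA hB hC b1 mb1 x).
rewrite (Kb R hR2 a1 a2 a3 b1 b2 b3 c1 c2 c3 U hA hB hC b2 mb2 x).
rewrite (Kb R hR2 a1 a2 a3 b1 b2 b3 c1 c2 c3 U hA hB hC b3 mb3 x).
rewrite (Kb R hR2 a1 a2 a3 c1 c2 c3 b1 b2 b3 U2 hA hC hB c1 mc1 x).
rewrite (Kb R hR2 a1 a2 a3 c1 c2 c3 b1 b2 b3 U2 hA hC hB c2 mc2 x).
rewrite (Kb R hR2 a1 a2 a3 c1 c2 c3 b1 b2 b3 U2 hA hC hB c3 mc3 x).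
ring.
Qed.

Lemma adMk XA1 XA2 XA3 XB1 XB2 XB3 XC1 XC2 XC3 : ad (mk9 XA1 XA2 XA3 XB1 XB2 XB3 XC1 XC2 XC3) = mk9 ((XB1 + XB2 + XB3) + (XC1 + XC2 + XC3)) ((XB1 + XB2 + XB3) + (XC1 + XC2 + XC3)) ((XB1 + XB2 + XB3) + (XC1 + XC2 + XC3)) ((XC1 + XC2 + XC3) + XB1) ((XC1 + XC2 + XC3) + XB2) ((XC1 + XC2 + XC3) + XB3) ((XB1 + XB2 + XB3) + XC1) ((XB1 + XB2 + XB3) + XC2) ((XB1 + XB2 + XB3) + XC3).
Proof.
destr_uniq.
apply: ext9; rewrite adE ?mk9_a1 ?mk9_a2 ?mk9_a3 ?mk9_b1 ?mk9_b2 ?mk9_b3 ?mk9_c1 ?mk9_c2 ?mk9_c3 !inE; eqs; rewrite /=; ring.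
Qed.

Lemma mk9_0 : mk9 0 0 0 0 0 0 0 0 0 = 0.
Proof. apply: ext9; by rewrite zerofE ?mk9_a1 ?mk9_a2 ?mk9_a3 ?mk9_b1 ?mk9_b2 ?mk9_b3 ?mk9_c1 ?mk9_c2 ?mk9_c3. Qed.

Lemma sub_mk9 XA1 XA2 XA3 XB1 XB2 XB3 XC1 XC2 XC3 YA1 YA2 YA3 YB1 YB2 YB3 YC1 YC2 YC3 :
  mk9 XA1 XA2 XA3 XB1 XB2 XB3 XC1 XC2 XC3 - mk9 YA1 YA2 YA3 YB1 YB2 YB3 YC1 YC2 YC3 =
  mk9 (XA1 - YA1) (XA2 - YA2) (XA3 - YA3) (XB1 - YB1) (XB2 - YB2) (XB3 - YB3) (XC1 - YC1) (XC2 - YC2) (XC3 - YC3).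
Proof. apply: ext9; by rewrite subfE ?mk9_a1 ?mk9_a2 ?mk9_a3 ?mk9_b1 ?mk9_b2 ?mk9_b3 ?mk9_c1 ?mk9_c2 ?mk9_c3. Qed.

Lemma axx (x : R) : x + x = 0. Proof. exact: (addxx R hR2). Qed.
Lemma oxx (x : R) : - x = x. Proof. exact: (oppxx R hR2). Qed.
Lemma c2E (w x y : R) : x = y + 2%:R * w -> x = y. Proof. exact: (char2E R hR2). Qed.

Lemma lc3 (x y P1 P2 P3 k1 k2 k3 w : R) : P1 = 0 -> P2 = 0 -> P3 = 0 ->
  x = y + k1 * P1 + k2 * P2 + k3 * P3 + 2%:R * w -> x = y.
Proof. by move=> -> -> ->; rewrite hR2 !mulr0 !mul0r !addr0. Qed.

Lemma ad0 : ad 0 = 0.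
Proof.
have := adMk 0 0 0 0 0 0 0 0 0; rewrite mk9_0 => ->.
rewrite -mk9_0; congr mk9; ring.
Qed.

Lemma alg1 (lam mu nu XA1 XA2 XA3 XB1 XB2 XB3 XC1 XC2 XC3 : R) :
  mu * lam = 1 -> nu * (1 - lam) = 1 ->
  XB1 + XB2 + XB3 + (XC1 + XC2 + XC3) = lam * XA1 ->
  XB1 + XB2 + XB3 + (XC1 + XC2 + XC3) = lam * XA2 ->
  XB1 + XB2 + XB3 + (XC1 + XC2 + XC3) = lam * XA3 ->
  XC1 + XC2 + XC3 + XB1 = lam * XB1 ->
  XC1 + XC2 + XC3 + XB2 = lam * XB2 ->
  XC1 + XC2 + XC3 + XB3 = lam * XB3 ->
  XB1 + XB2 + XB3 + XC1 = lam * XC1 ->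
  XB1 + XB2 + XB3 + XC2 = lam * XC2 ->
  XB1 + XB2 + XB3 + XC3 = lam * XC3 ->
  [/\ XA1 = 0, XA2 = 0, XA3 = 0 & [/\ XB1 = 0, XB2 = 0, XB3 = 0, XC1 = 0 & [/\ XC2 = 0 & XC3 = 0]]].
Proof.
move=> hmu hnu ea1 ea2 ea3 eb1 eb2 eb3 ec1 ec2 ec3.
have lin_t : forall C y : R, C + y = lam * y -> (lam + 1) * y = C.
  by move=> C y h; rewrite mulrDl mul1r -h -addrA axx addr0.
have sum3 : forall C y1 y2 y3 : R, (lam + 1) * y1 = C -> (lam + 1) * y2 = C ->
    (lam + 1) * y3 = C -> (lam + 1) * (y1 + y2 + y3) = C.
  by move=> C y1 y2 y3 h1 h2 h3; rewrite !mulrDr h1 h2 h3 axx add0r.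
have hBB := sum3 _ _ _ _ (lin_t _ _ eb1) (lin_t _ _ eb2) (lin_t _ _ eb3).
have hCC := sum3 _ _ _ _ (lin_t _ _ ec1) (lin_t _ _ ec2) (lin_t _ _ ec3).
set B := XB1 + XB2 + XB3 in hBB hCC ea1 ea2 ea3 ec1 ec2 ec3.
set C := XC1 + XC2 + XC3 in hBB hCC ea1 ea2 ea3 eb1 eb2 eb3.
have hB0 : B = 0.
  have h2 : (lam + 1) * ((lam + 1) * B) = lam * lam * B + B + 2%:R * (lam * B) by ring.
  rewrite hBB hCC hR2 mul0r addr0 in h2.
  have h3 : lam * lam * B = 0 by apply: (addIr B); rewrite add0r -h2.
  have h4 : (mu * lam) * (mu * lam) * B = mu * mu * (lam * lam * B) by ring.
  by rewrite hmu !mul1r h3 mulr0 in h4.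
have hC0 : C = 0 by rewrite -hBB hB0 mulr0.
have hnu' : nu * (lam + 1) = 1 by rewrite -[lam in lam + 1]oxx addrC.
have kill : forall y, (lam + 1) * y = 0 -> y = 0.
  by move=> y h; rewrite -[y]mul1r -hnu' -mulrA h mulr0.
have killA : forall y, 0 = lam * y -> y = 0.
  by move=> y h; rewrite -[y]mul1r -hmu -mulrA -h mulr0.
rewrite hB0 hC0 add0r in ea1 ea2 ea3.
do !split; [exact: killA|exact: killA|exact: killA|..]; apply: kill;
  rewrite ?(lin_t _ _ eb1) ?(lin_t _ _ eb2) ?(lin_t _ _ eb3) ?(lin_t _ _ ec1) ?(lin_t _ _ ec2) ?(lin_t _ _ ec3) //.
Qed.


Lemma part1 (lam : R) : (exists mu : R, mu * lam = 1) -> (exists nu : R, nu * (1 - lam) = 1) ->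
  forall v, eigsp ll lam v -> v = 0.
Proof.
move=> [mu hmu] [nu hnu] v; rewrite /eigsp (mk9_eta v) adMk scale_mk9 => /mk9_inj.
case=> [ea1 [ea2 [ea3 [eb1 [eb2 [eb3 [ec1 [ec2 ec3]]]]]]]].
have [-> -> -> [-> -> -> -> [-> ->]]] :=
  alg1 lam mu nu _ _ _ _ _ _ _ _ _ hmu hnu ea1 ea2 ea3 eb1 eb2 eb3 ec1 ec2 ec3.
exact: mk9_0.
Qed.

Lemma inspan4 (u0 u1 u2 u3 v : alg R) : inspan [:: u0; u1; u2; u3] v <->
  exists x0 x1 x2 x3 : R, v = x0 *: u0 + x1 *: u1 + x2 *: u2 + x3 *: u3.
Proof.
split.
- case=> cs [hs ->]; case: cs hs => [|x0 [|x1 [|x2 [|x3 [|? ?]]]]] // _.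
  exists x0, x1, x2, x3; by rewrite /= !big_ord_recl big_ord0 /= !addrA addr0.
- case=> x0 [x1 [x2 [x3 ->]]]; exists [:: x0; x1; x2; x3]; split => //.
  by rewrite /= !big_ord_recl big_ord0 /= !addrA addr0.
Qed.

Lemma inspan5 (u0 u1 u2 u3 u4 v : alg R) : inspan [:: u0; u1; u2; u3; u4] v <->
  exists x0 x1 x2 x3 x4 : R, v = x0 *: u0 + x1 *: u1 + x2 *: u2 + x3 *: u3 + x4 *: u4.
Proof.
split.
- case=> cs [hs ->]; case: cs hs => [|x0 [|x1 [|x2 [|x3 [|x4 [|? ?]]]]]] // _.
  exists x0, x1, x2, x3, x4; by rewrite /= !big_ord_recl big_ord0 /= !addrA addr0.
- case=> x0 [x1 [x2 [x3 [x4 ->]]]]; exists [:: x0; x1; x2; x3; x4]; split => //.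
  by rewrite /= !big_ord_recl big_ord0 /= !addrA addr0.
Qed.

Lemma part2 v : eigsp ll 0 v <-> inspan [:: e R a1; e R a2; e R a3; sall R] v.
Proof.
rewrite inspan4 /eigsp e_a1 e_a2 e_a3 sall_mk9 (mk9_eta v) adMk scale_mk9.
move: (v a1) (v a2) (v a3) (v b1) (v b2) (v b3) (v c1) (v c2) (v c3) => A1 A2 A3 B1 B2 B3 C1 C2 C3.
have z0 : forall x y w : R, x + y = 0 * w -> y = x.
  by move=> x y w; rewrite mul0r => h; apply: (addrI x); rewrite h axx.
split.
- move/mk9_inj => [ea1 [ea2 [ea3 [eb1 [eb2 [eb3 [ec1 [ec2 ec3]]]]]]]].
  exists (A1 + B1), (A2 + B1), (A3 + B1), B1.
  rewrite !scale_mk9 !add_mk9.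
  have hb2 : B2 = B1 by rewrite (z0 _ _ _ eb2) (z0 _ _ _ eb1).
  have hb3 : B3 = B1 by rewrite (z0 _ _ _ eb3) (z0 _ _ _ eb1).
  have hc1 : C1 = B1 by rewrite (z0 _ _ _ ec1) -(z0 _ _ _ ea1) -(z0 _ _ _ eb1).
  have hc2 : C2 = B1 by rewrite (z0 _ _ _ ec2) -(z0 _ _ _ ea1) -(z0 _ _ _ eb1).
  have hc3 : C3 = B1 by rewrite (z0 _ _ _ ec3) -(z0 _ _ _ ea1) -(z0 _ _ _ eb1).
  congr mk9; rewrite ?hb2 ?hb3 ?hc1 ?hc2 ?hc3; first [ring | apply: (c2E (- B1)); ring].
- case=> x0 [x1 [x2 [x3 E]]]; rewrite !scale_mk9 !add_mk9 in E.
  case/mk9_inj: E => [-> [-> [-> [-> [-> [-> [-> [-> ->]]]]]]]].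
  congr mk9; first [apply: (c2E (x3 *+ 3)); ring | apply: (c2E (x3 *+ 2)); ring].
Qed.

Lemma part3 v : eigsp ll 1 v <->
  inspan [:: e R b1 + e R b2; e R b1 + e R b3; e R c1 + e R c2; e R c1 + e R c3] v.
Proof.
rewrite inspan4 /eigsp e_b1 e_b2 e_b3 e_c1 e_c2 e_c3 !add_mk9 (mk9_eta v) adMk scale_mk9.
move: (v a1) (v a2) (v a3) (v b1) (v b2) (v b3) (v c1) (v c2) (v c3) => A1 A2 A3 B1 B2 B3 C1 C2 C3.
split.
- move/mk9_inj => [ea1 [ea2 [ea3 [eb1 [eb2 [eb3 [ec1 [ec2 ec3]]]]]]]].
  have hC0 : C1 + C2 + C3 = 0 by apply: (addIr B1); rewrite eb1 mul1r add0r.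
  have hB0 : B1 + B2 + B3 = 0 by apply: (addIr C1); rewrite ec1 mul1r add0r.
  rewrite hB0 hC0 add0r mul1r in ea1; rewrite hB0 hC0 add0r mul1r in ea2; rewrite hB0 hC0 add0r mul1r in ea3.
  have hB1 : B1 = B2 + B3 by apply: (addIr (B2 + B3)); rewrite addrA hB0 axx.
  have hC1 : C1 = C2 + C3 by apply: (addIr (C2 + C3)); rewrite addrA hC0 axx.
  exists B2, B3, C2, C3; rewrite !scale_mk9 !add_mk9.
  congr mk9; rewrite -?ea1 -?ea2 -?ea3 ?hB1 ?hC1; ring.
- case=> x0 [x1 [x2 [x3 E]]]; rewrite !scale_mk9 !add_mk9 in E.
  case/mk9_inj: E => [-> [-> [-> [-> [-> [-> [-> [-> ->]]]]]]]].
  congr mk9; first [apply: (c2E (x0 + x1 + x2 + x3)); ring | apply: (c2E (x2 + x3)); ring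
                   | apply: (c2E (x0 + x1)); ring].
Qed.

Lemma ad3 v : ad (ad (ad v)) = ad (ad v).
Proof.
rewrite (mk9_eta v) !adMk.
move: (v a1) (v a2) (v a3) (v b1) (v b2) (v b3) (v c1) (v c2) (v c3) => A1 A2 A3 B1 B2 B3 C1 C2 C3.
congr mk9; first [apply: (c2E ((B1 + B2 + B3 + (C1 + C2 + C3)) *+ 6)); ring
  | apply: (c2E ((C1 + C2 + C3) *+ 5 + (B1 + B2 + B3) *+ 3)); ring
  | apply: (c2E ((B1 + B2 + B3) *+ 5 + (C1 + C2 + C3) *+ 3)); ring].
Qed.

Lemma iter0 k v : iter k (fun w => ad w - 0 *: w) v = iter k ad v.
Proof. by apply: eq_iter => w; rewrite scale0r subr0. Qed.

Lemma geig0_iff v : geigsp ll 0 v <-> ad (ad v) = 0.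
Proof.
split.
- case=> k; rewrite iter0.
  elim: k v => [|k IH] v; first by move=> /= ->; rewrite !ad0.
  by rewrite iterSr => /IH; rewrite ad3.
- by move=> h; exists 2%N; rewrite iter0.
Qed.

Lemma part4 v : geigsp ll 0 v <->
  inspan [:: e R a1; e R a2; e R a3; e R b1 + e R b2 + e R b3; e R c1 + e R c2 + e R c3] v.
Proof.
rewrite geig0_iff inspan5 e_a1 e_a2 e_a3 e_b1 e_b2 e_b3 e_c1 e_c2 e_c3 !add_mk9 (mk9_eta v) !adMk -mk9_0.
move: (v a1) (v a2) (v a3) (v b1) (v b2) (v b3) (v c1) (v c2) (v c3) => A1 A2 A3 B1 B2 B3 C1 C2 C3.
split.
- move/mk9_inj => [ea1 [ea2 [ea3 [eb1 [eb2 [eb3 [ec1 [ec2 ec3]]]]]]]].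
  have hb2 : B2 = B1 by apply: (lc3 _ _ _ _ _ 1 (-1) 0 0 eb2 eb1 eb1); ring.
  have hb3 : B3 = B1 by apply: (lc3 _ _ _ _ _ 1 (-1) 0 0 eb3 eb1 eb1); ring.
  have hc2 : C2 = C1 by apply: (lc3 _ _ _ _ _ 1 (-1) 0 0 ec2 ec1 ec1); ring.
  have hc3 : C3 = C1 by apply: (lc3 _ _ _ _ _ 1 (-1) 0 0 ec3 ec1 ec1); ring.
  exists A1, A2, A3, B1, C1; rewrite !scale_mk9 !add_mk9.
  congr mk9; rewrite ?hb2 ?hb3 ?hc2 ?hc3; ring.
- case=> x0 [x1 [x2 [x3 [x4 E]]]]; rewrite !scale_mk9 !add_mk9 in E.
  case/mk9_inj: E => [E1 [E2 [E3 [E4 [E5 [E6 [E7 [E8 E9]]]]]]]]; rewrite ?E1 ?E2 ?E3 ?E4 ?E5 ?E6 ?E7 ?E8 ?E9.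
  congr mk9; first [apply: (c2E (x3 *+ 6 + x4 *+ 6)); ring
    | apply: (c2E (x3 *+ 5 + x4 *+ 3)); ring | apply: (c2E (x4 *+ 5 + x3 *+ 3)); ring].
Qed.

Lemma T2 v : ad (ad v - 1 *: v) - 1 *: (ad v - 1 *: v) = 0 -> ad v - 1 *: v = 0.
Proof.
rewrite (mk9_eta v) adMk scale_mk9 sub_mk9 adMk scale_mk9 sub_mk9 -mk9_0.
move: (v a1) (v a2) (v a3) (v b1) (v b2) (v b3) (v c1) (v c2) (v c3) => A1 A2 A3 B1 B2 B3 C1 C2 C3.
move/mk9_inj => [pa1 [pa2 [pa3 [pb1 [pb2 [pb3 [pc1 [pc2 pc3]]]]]]]].
congr mk9; first
  [ apply: (lc3 _ _ _ _ _ (-1) 1 1 0 pa1 pb1 pc1); ring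
  | apply: (lc3 _ _ _ _ _ (-1) 1 1 0 pa2 pb1 pc1); ring
  | apply: (lc3 _ _ _ _ _ (-1) 1 1 0 pa3 pb1 pc1); ring
  | apply: (lc3 _ _ _ _ _ 1 0 0 (- (C1 + C2 + C3)) pc1 pc1 pc1); ring
  | apply: (lc3 _ _ _ _ _ 1 0 0 (- (B1 + B2 + B3)) pb1 pb1 pb1); ring ].
Qed.

Lemma geig1_iff v : geigsp ll 1 v <-> eigsp ll 1 v.
Proof.
have E : forall w, eigsp ll 1 w <-> ad w - 1 *: w = 0.
  move=> w; rewrite /eigsp; split => h; first by rewrite h subrr.
  by apply/eqP; rewrite -subr_eq0; apply/eqP.
rewrite E; split.
- case=> k; elim: k v => [|k IH] v; first by move=> /= ->; rewrite ad0 scaler0 subrr.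
  by rewrite iterSr => /IH /T2.
- by move=> h; exists 1%N.
Qed.

Lemma part6 v : exists x y, geigsp ll 0 x /\ eigsp ll 1 y /\ v = x + y.
Proof.
rewrite (mk9_eta v).
move: (v a1) (v a2) (v a3) (v b1) (v b2) (v b3) (v c1) (v c2) (v c3) => A1 A2 A3 B1 B2 B3 C1 C2 C3.
exists (mk9 A1 A2 A3 (B1 + B2 + B3) (B1 + B2 + B3) (B1 + B2 + B3) (C1 + C2 + C3) (C1 + C2 + C3) (C1 + C2 + C3)).
exists (mk9 0 0 0 (B1 + (B1 + B2 + B3)) (B2 + (B1 + B2 + B3)) (B3 + (B1 + B2 + B3))
               (C1 + (C1 + C2 + C3)) (C2 + (C1 + C2 + C3)) (C3 + (C1 + C2 + C3))).
split; [|split].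
- rewrite geig0_iff !adMk -mk9_0.
  congr mk9; first [apply: (c2E ((B1 + B2 + B3) *+ 6 + (C1 + C2 + C3) *+ 6)); ring
    | apply: (c2E ((B1 + B2 + B3) *+ 5 + (C1 + C2 + C3) *+ 3)); ring
    | apply: (c2E ((C1 + C2 + C3) *+ 5 + (B1 + B2 + B3) *+ 3)); ring].
- rewrite /eigsp adMk scale_mk9.
  congr mk9; first [apply: (c2E ((B1 + B2 + B3) *+ 2 + (C1 + C2 + C3) *+ 2)); ring
    | apply: (c2E ((C1 + C2 + C3) *+ 2)); ring
    | apply: (c2E ((B1 + B2 + B3) *+ 2)); ring].
- rewrite add_mk9.
  congr mk9; first [ring | apply: (c2E (- (B1 + B2 + B3))); ring
    | apply: (c2E (- (C1 + C2 + C3))); ring].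
Qed.

Lemma part7 v : geigsp ll 0 v -> eigsp ll 1 v -> v = 0.
Proof.
move=> /geig0_iff h0; rewrite /eigsp scale1r => h1.
by rewrite -h1 -h1.
Qed.

Lemma main :
  let l : alg R := e R a1 + e R a2 + e R a3 in
  let m : alg R := e R b1 + e R b2 + e R b3 in
  let n : alg R := e R c1 + e R c2 + e R c3 in
  let s : alg R := sall R in
  (forall lam : R, (exists mu : R, mu * lam = 1) ->
     (exists nu : R, nu * (1 - lam) = 1) ->
     forall v, eigsp l lam v -> v = 0) /\
  (forall v, eigsp l 0 v <-> inspan [:: e R a1; e R a2; e R a3; s] v) /\
  (forall v, eigsp l 1 v <->
     inspan [:: e R b1 + e R b2; e R b1 + e R b3; e R c1 + e R c2; e R c1 + e R c3] v) /\
  (forall v, geigsp l 0 v <-> inspan [:: e R a1; e R a2; e R a3; m; n] v) /\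
  (forall v, geigsp l 1 v <-> eigsp l 1 v) /\
  (forall v, exists x y, geigsp l 0 x /\ eigsp l 1 y /\ v = x + y) /\
  (forall v, geigsp l 0 v -> eigsp l 1 v -> v = 0).
Proof.
move=> l m n s.
split; first exact: part1.
split; first exact: part2.
split; first exact: part3.
split; first exact: part4.
split; first exact: geig1_iff.
split; first exact: part6.
exact: part7.
Qed.

End Main.


Theorem proposition5p16 (R : comPzRingType) (hR2 : 2%:R = 0 :> R)
  (a1 a2 a3 b1 b2 b3 c1 c2 c3 : pt)
  (huniq : uniq [:: a1; a2; a3; b1; b2; b3; c1; c2; c3])
  (hl : a3 = wedge a1 a2) (hm : b3 = wedge b1 b2) (hn : c3 = wedge c1 c2) :
  let l : alg R := e R a1 + e R a2 + e R a3 in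
  let m : alg R := e R b1 + e R b2 + e R b3 in
  let n : alg R := e R c1 + e R c2 + e R c3 in
  let s : alg R := sall R in
  (* the only eigenvalues are 0 and 1 *)
  (forall lam : R, (exists mu : R, mu * lam = 1) ->
     (exists nu : R, nu * (1 - lam) = 1) ->
     forall v, eigsp l lam v -> v = 0) /\
  (forall v, eigsp l 0 v <-> inspan [:: e R a1; e R a2; e R a3; s] v) /\
  (forall v, eigsp l 1 v <->
     inspan [:: e R b1 + e R b2; e R b1 + e R b3; e R c1 + e R c2; e R c1 + e R c3] v) /\
  (forall v, geigsp l 0 v <-> inspan [:: e R a1; e R a2; e R a3; m; n] v) /\
  (forall v, geigsp l 1 v <-> eigsp l 1 v) /\
  (* A = gen. 0-eigenspace (+) 1-eigenspace *)
  (forall v, exists x y, geigsp l 0 x /\ eigsp l 1 y /\ v = x + y) /\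
  (forall v, geigsp l 0 v -> eigsp l 1 v -> v = 0).
Proof.
have hA3 : a1 + a2 + a3 = 0 by rewrite hl wedgeE subrr.
have hB3 : b1 + b2 + b3 = 0 by rewrite hm wedgeE subrr.
have hC3 : c1 + c2 + c3 = 0 by rewrite hn wedgeE subrr.
exact: (main R hR2 a1 a2 a3 b1 b2 b3 c1 c2 c3 huniq hA3 hB3 hC3).
Qed.
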